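(* If $f_0, f_1, \dots : X \to \mathbb{R}$ are limsup functions converging uniformly to $f : X \to \mathbb{R}$, then $f$ is a limsup function.
   Context: Let $A$ be a non-empty countable set and $T$ a pruned tree on $A$ (a set of finite sequences of elements of $A$, closed under initial segments, in which every sequence has a proper extension in $T$). Let $X$ be the set of infinite branches of $T$, with the topology generated by the cylinder sets $O(s) = \{x \in X : s \text{ is an initial segment of } x\}$, $s \in T$. A function $f : X \to \mathbb{R}$ is a limsup function if there exists $u : T \to \mathbb{R}$ with $f(x) = \limsup_{t\to\infty} u(x_0,\dots,x_t)$ for every $x \in X$. *)

(* Defs.v *)
From HB Require Import structures.
From mathcomp Require Import all_boot all_order all_algebra.
From mathcomp Require Import all_classical all_reals all_analysis.
Set Implicit Arguments. Unset Strict Implicit. Unset Printing Implicit Defensive.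
Import Order.TTheory GRing.Theory Num.Theory.
Local Open Scope ring_scope.

Definition is_tree (A : Type) (T : seq A -> Prop) : Prop :=
  forall s n, T s -> T (take n s).

Definition pruned (A : Type) (T : seq A -> Prop) : Prop :=
  forall s, T s -> exists t, t <> [::] /\ T (s ++ t).

Definition is_branch (A : Type) (T : seq A -> Prop) (x : nat -> A) : Prop :=
  forall n, T (mkseq x n).

Definition branches (A : Type) (T : seq A -> Prop) :=
  {x : nat -> A | is_branch T x}.

(* f : X -> R is a limsup function: there is u : T -> R with
   f x = limsup_{t -> oo} u (x_0, ..., x_t) for all x in X.
   u is given as a function on all of seq A; only its values on T matter,
   since every (x_0,...,x_t) of a branch lies in T. *)
Definition limsup_fun (R : realType) (A : Type) (T : seq A -> Prop)
    (f : branches T -> R) : Prop :=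
  exists u : seq A -> R, forall x : branches T,
    ((f x)%:E = limn_esup (fun t : nat => (u (mkseq (proj1_sig x) t.+1))%:E))%E.

(* Main.v *)
Require Import Defs.
From HB Require Import structures.
From mathcomp Require Import all_boot all_order all_algebra.
From mathcomp Require Import all_classical all_reals all_analysis.
From mathcomp Require Import zify ring lra.
Import Order.TTheory GRing.Theory Num.Theory.
Local Open Scope ring_scope.
Section LS.
Variable R : realType.
Local Open Scope ereal_scope.
Lemma limsupE (u : (\bar R)^nat) : limn_esup u = ereal_inf (range (esups u)).
Proof. rewrite limn_esup_lim; apply: cvg_lim => //; exact: cvg_esups_inf. Qed.

Lemma ls_lt (u : (\bar R)^nat) b : limn_esup u < b -> exists n, forall k, (n <= k)%N -> u k < b.
Proof.
rewrite limsupE => /ereal_inf_lt[_ [n _ <-]] hn; exists n => k nk.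
by apply: le_lt_trans hn; apply: ereal_sup_ubound; exists k.
Qed.

Lemma ls_gt (u : (\bar R)^nat) b : b < limn_esup u -> forall n, exists2 k, (n <= k)%N & b < u k.
Proof.
rewrite limsupE => hb n.
have : b < esups u n by apply: lt_le_trans hb _; apply: ereal_inf_lbound; exists n.
by move=> /ereal_sup_gt[_ [k nk <-]] bk; exists k.
Qed.

Lemma ls_le (u : (\bar R)^nat) b : (exists n, forall k, (n <= k)%N -> u k <= b) -> limn_esup u <= b.
Proof.
move=> [n hn]; rewrite limsupE; apply: (@le_trans _ _ (esups u n)).
  by apply: ereal_inf_lbound; exists n.
by apply: ge_ereal_sup => _ [k nk <-]; apply: hn.
Qed.

Lemma ls_ge (u : (\bar R)^nat) b : (forall n, exists2 k, (n <= k)%N & b <= u k) -> b <= limn_esup u.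
Proof.
move=> h; rewrite limsupE; apply: le_ereal_inf_tmp => _ [n _ <-].
have [k nk bk] := h n; apply: le_trans bk _; apply: ereal_sup_ubound; exists k => //.
Qed.
End LS.
Lemma stab_bool (b : nat -> bool) : (forall t, b t -> b t.+1) ->
  exists T, forall t, (T <= t)%N -> b t.+1 = b t.
Proof.
move=> hb; case: (pselect (exists t, b t)) => [[t0 h0]|h].
  have H : forall t, (t0 <= t)%N -> b t.
    elim=> [|t IH]; first by rewrite leqn0 => /eqP <-.
    rewrite leq_eqVlt => /orP[/eqP <- //|]; rewrite ltnS => /IH; exact: hb.
  by exists t0 => t ht; rewrite H ?H //; apply: leqW.
exists 0%N => t _; have -> : b t = false by apply/negP => bt; apply: h; exists t.
by apply/negP => bt; apply: h; exists t.+1.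
Qed.

Lemma ev_fin (I : eqType) (l : seq I) (P : I -> nat -> Prop) :
  (forall i, i \in l -> exists T, forall t, (T <= t)%N -> P i t) ->
  exists T, forall i, i \in l -> forall t, (T <= t)%N -> P i t.
Proof.
elim: l => [|a l IH] h; first by exists 0%N.
have [T1 h1] := h a (mem_head _ _).
have [T2 h2] : exists T, forall i, i \in l -> forall t, (T <= t)%N -> P i t.
  by apply: IH => i il; apply: h; rewrite in_cons il orbT.
exists (maxn T1 T2) => i; rewrite in_cons => /orP[/eqP ->|il] t ht.
  by apply: h1; apply: leq_trans ht; apply: leq_maxl.
by apply: h2 => //; apply: leq_trans ht; apply: leq_maxr.
Qed.

Lemma take_mkseq (A : Type) (x : nat -> A) i n : (i <= n)%N -> take i (mkseq x n) = mkseq x i.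
Proof. by move=> h; rewrite /mkseq -map_take take_iota (minn_idPl h). Qed.
Section Core.
Variables (R : realType) (A : Type) (w : nat -> seq A -> R) (eps : nat -> R) (q : nat -> R).

Definition hit k c (s : seq A) : bool := c - 2 * eps k < w k s.
Definition cnt k c (s : seq A) : nat := count (fun i => hit k c (take i.+1 s)) (iota 0 (size s)).
Definition good c s n : bool := all (fun k => n <= cnt k c s)%N (iota 0 n.+1).
Definition event c s j : bool :=
  has (fun m => good c s m && ~~ good c (take (size s).-1 s) m) (iota j (size s).+1).
Definition uu (s : seq A) : R :=
  \big[Num.max/ - (size s)%:R]_(j < size s | event (q j) s j) q j.

Lemma cnt_le_size k c s : (cnt k c s <= size s)%N.
Proof. by rewrite /cnt (leq_trans (count_size _ _)) // size_iota. Qed.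

Lemma good_le_size c s n : good c s n -> (n <= size s)%N.
Proof.
move=> /allP /(_ 0%N); rewrite mem_iota /= => /(_ isT) h.
exact: leq_trans h (cnt_le_size _ _ _).
Qed.

Lemma cnt_anti k c c' s : c <= c' -> (cnt k c' s <= cnt k c s)%N.
Proof.
move=> cc; rewrite /cnt; apply: sub_count => i; rewrite /hit => h.
by apply: le_lt_trans h; rewrite lerD2r.
Qed.

Lemma good_anti c c' s n : c <= c' -> good c' s n -> good c s n.
Proof.
move=> cc /allP h; apply/allP => k kin; apply: leq_trans (h k kin) _.
exact: cnt_anti.
Qed.

Variable x : nat -> A.
Notation sq t := (mkseq x t.+1).
Definition C k c t := count (fun i => hit k c (sq i)) (iota 0 t).

Lemma cntE k c t : cnt k c (sq t) = C k c t.+1.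
Proof.
rewrite /cnt /C size_mkseq; apply: eq_in_count => i.
rewrite mem_iota add0n => /andP[_ hi].
by rewrite take_mkseq.
Qed.

Lemma CS k c t : C k c t.+1 = (C k c t + hit k c (sq t))%N.
Proof.
rewrite /C; have -> : iota 0 t.+1 = iota 0 t ++ [:: t] by rewrite -addn1 iotaD.
by rewrite count_cat /= addn0.
Qed.

Lemma C_mono k c t t' : (t <= t')%N -> (C k c t <= C k c t')%N.
Proof. by move=> h; rewrite /C -(subnKC h) iotaD count_cat leq_addr. Qed.

Lemma good_mono c t t' n : (t <= t')%N -> good c (sq t) n -> good c (sq t') n.
Proof.
move=> h /allP g; apply/allP => k kin; rewrite cntE.
by apply: leq_trans (g k kin) _; rewrite cntE; apply: C_mono.
Qed.

Lemma prevE t : take (size (sq t.+1)).-1 (sq t.+1) = sq t.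
Proof. by rewrite size_mkseq take_mkseq. Qed.

Lemma upper c' k0 T0 : (forall t, (T0 <= t)%N -> ~~ hit k0 c' (sq t)) ->
  exists T, forall t, (T <= t)%N -> forall j, c' <= q j -> ~~ event (q j) (sq t.+1) j.
Proof.
move=> hT0.
have HC : forall t, (C k0 c' t <= T0)%N.
  elim=> [|t IH]; first by [].
  rewrite CS; case: (leqP T0 t) => ht.
    by rewrite (negbTE (hT0 t ht)) addn0.
  rewrite (leq_trans _ ht) // -addn1 leq_add ?leq_b1 //.
  by rewrite /C (leq_trans (count_size _ _)) // size_iota.
pose M := (k0 + T0)%N.
have gM : forall t m, good c' (sq t) m -> (m <= M)%N.
  move=> t m /allP g; case: (leqP k0 m) => h; last by rewrite /M ltnW // ltn_addr.
  have := g k0; rewrite mem_iota /= ltnS h => /(_ isT); rewrite cntE => hm.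
  by rewrite /M (leq_trans (leq_trans hm (HC _))) // leq_addl.
pose l := [seq (a, b) | a <- iota 0 M.+1, b <- iota 0 M.+1].
have [T hT] := @ev_fin _ l (fun p t => good (q p.1) (sq t.+1) p.2 = good (q p.1) (sq t) p.2)
   (fun p _ => @stab_bool (fun t => good (q p.1) (sq t) p.2) (fun t => @good_mono (q p.1) t t.+1 p.2 (leqnSn t))).
exists T => t ht j cj; apply/hasPn => m; rewrite mem_iota => /andP[jm _].
rewrite prevE; apply/negP => /andP[g1 g2].
have mM : (m <= M)%N by apply: (gM t.+1); exact: good_anti g1.
have jl : (j, m) \in l by apply: allpairs_f; rewrite mem_iota /= ltnS // (leq_trans jm).
by move: (hT _ jl t ht) g2 => /= <-; rewrite g1.
Qed.

Lemma lower c j T : (forall k n, exists2 t, (n <= t)%N & hit k c (sq t)) ->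
  exists2 t, (T <= t)%N & (j < size (sq t.+1))%N && event c (sq t.+1) j.
Proof.
move=> hh.
have Cun : forall k m, exists t, (m <= C k c t)%N.
  move=> k; elim=> [|m [t IH]]; first by exists 0%N.
  have [t' tt' ht'] := hh k t; exists t'.+1; rewrite CS ht' addn1 ltnS.
  by apply: leq_trans IH (@C_mono k c _ _ tt').
have Gev : forall m, exists t, good c (sq t) m.
  move=> m.
  have [Tm hTm] := @ev_fin _ (iota 0 m.+1) (fun k t => (m <= C k c t)%N)
     (fun k _ => let: ex_intro t ht := Cun k m in
        ex_intro _ t (fun t' h => leq_trans ht (@C_mono k c _ _ h))).
  exists Tm; apply/allP => k kin; rewrite cntE; apply: hTm => //.
pose m := (j + T + 2)%N.
have [ts hts tmin] := ex_minnP (Gev m).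
have ms := @good_le_size _ _ _ hts; rewrite size_mkseq in ms.
case: ts hts tmin ms => [|t1] hts tmin ms; first by rewrite /m addn2 in ms.
have hT : (T <= t1)%N by move: ms; rewrite /m; lia.
exists t1 => //; apply/andP; split.
  by rewrite size_mkseq; move: ms; rewrite /m; lia.
apply/hasP; exists m.
  by rewrite mem_iota size_mkseq; move: ms hT; rewrite /m; lia.
rewrite prevE hts /=; apply/negP => g; have := tmin _ g.
by rewrite ltnn.
Qed.

End Core.

Section UU.
Variables (R : realType) (A : Type) (w : nat -> seq A -> R) (eps : nat -> R) (q : nat -> R).
Lemma uu_lower s j : (j < size s)%N -> @event R A w eps (q j) s j -> q j <= @uu R A w eps q s.
Proof.
move=> jl ev; rewrite /uu (bigD1 (Ordinal jl)) //=.
by rewrite le_max lexx.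
Qed.
Lemma uu_upper s b : - (size s)%:R < b ->
  (forall j, (j < size s)%N -> @event R A w eps (q j) s j -> q j < b) -> @uu R A w eps q s < b.
Proof.
move=> h1 h2; rewrite /uu; apply: (big_ind (fun v => v < b)) => //.
  by move=> a c ha hc; rewrite gt_max ha hc.
by move=> [j jl] /= ev; apply: h2.
Qed.
End UU.

Theorem mainTheorem4 (R : realType) (A : countType) (a0 : A)
    (T : seq A -> Prop) (HT : is_tree T) (HP : pruned T)
    (fs : nat -> branches T -> R) (f : branches T -> R) :
  (forall n, limsup_fun (fs n)) ->
  (forall e : R, 0 < e -> exists N : nat, forall n : nat, (N <= n)%N ->
     forall x : branches T, `|fs n x - f x| < e) ->
  limsup_fun f.
Proof.
move=> Hfs Hunif.
pose eps (k : nat) : R := (k.+1%:R)^-1.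
have eps_gt0 k : 0 < eps k by rewrite /eps invr_gt0 ltr0n.
have [N HN] := choice (fun k => Hunif (eps k) (eps_gt0 k)).
have [w Hw] := choice (fun k => Hfs (N k)).
pose q (j : nat) : R := ratr (odflt 0%R (unpickle j)).
have qE r : q (pickle r) = ratr r by rewrite /q pickleK.
exists (@uu R A w eps q) => x.
set xf := proj1_sig x.
have Hg k : `|fs (N k) x - f x| < eps k by apply: HN.
have Hwk k : ((fs (N k) x)%:E = limn_esup (fun t => (w k (mkseq xf t.+1))%:E))%E by apply: Hw.
set L := limn_esup _.
have low r : ratr r < f x -> ((ratr r)%:E <= L)%E.
  move=> rf; set c := ratr r.
  have hh : forall k n, exists2 t, (n <= t)%N & @hit R A w eps k c (mkseq xf t.+1).
    move=> k n.
    have : ((c - 2 * eps k)%:E < limn_esup (fun t => (w k (mkseq xf t.+1))%:E))%E.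
      rewrite -Hwk lte_fin; move: (Hg k); rewrite ltr_norml => /andP[h1 h2].
      have := eps_gt0 k; lra.
    move=> /(@ls_gt R) /(_ n) [t nt ht]; exists t => //; rewrite /hit -lte_fin //.
  apply: (@ls_ge R) => n.
  have [t nt /andP[jl ev]] := @lower R A w eps xf c (pickle r) n hh.
  exists t.+1; first exact: leqW.
  rewrite lee_fin /c -(qE r); apply: (@uu_lower R A w eps q) => //; by rewrite qE.
have upp b : f x < b -> (L <= b%:E)%E.
  move=> fb.
  have [r /andP[r1 r2]] : exists r, ratr r \in `]f x, b[ by apply: rat_in_itvoo.
  rewrite !bnd_simp in r1 r2.
  set c := ratr r in r1 r2.
  set d := c - f x.
  have d0 : 0 < d by rewrite /d subr_gt0.
  pose k0 := Num.Def.archi_bound (3 / d).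
  have hk0 : 3 * eps k0 < d.
    have := archi_boundP (x := 3 / d) (divr_ge0 (ler0n _ 3) (ltW d0)).
    rewrite -/k0 ltr_pdivrMr // => h.
    rewrite /eps ltr_pdivrMr ?ltr0n //.
    apply: lt_le_trans h _; rewrite mulrC ler_pM2l // ler_nat //.
  have : (limn_esup (fun t => (w k0 (mkseq xf t.+1))%:E) < (c - 2 * eps k0)%:E)%E.
    rewrite -Hwk lte_fin; move: (Hg k0); rewrite ltr_norml => /andP[h1 h2].
    move: hk0; rewrite /d; lra.
  move=> /(@ls_lt R) [T0 hT0].
  have hT0' : forall t, (T0 <= t)%N -> ~~ @hit R A w eps k0 c (mkseq xf t.+1).
    by move=> t /hT0; rewrite lte_fin /hit -leNgt => /ltW.
  have [T1 hT1] := @upper R A w eps q xf c k0 T0 hT0'.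
  pose n0 := Num.Def.archi_bound `|b|.
  have hn0 := archi_boundP (normr_ge0 b); rewrite -/n0 in hn0.
  apply: (@ls_le R); exists (maxn T1 n0).+1 => k; case: k => // t.
  rewrite ltnS geq_max => /andP[t1 t2].
  rewrite lee_fin; apply: ltW; apply: (@uu_upper R A w eps q).
    rewrite size_mkseq.
    have : (n0%:R <= (t.+2)%:R :> R) by rewrite ler_nat; lia.
    have : - b <= `|b| by rewrite -normrN ler_norm.
    lra.
  move=> j _ ev; have : q j < c.
    rewrite ltNge; apply/negP => cq; by move: (hT1 t t1 j cq); rewrite ev.
  lra.
apply/eqP; rewrite eq_le; apply/andP; split.
  case E : L => [l| |] //.
  - rewrite lee_fin leNgt; apply/negP => lf.
    have [r /andP[r1 r2]] : exists r, ratr r \in `]l, f x[ by apply: rat_in_itvoo.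
    rewrite !bnd_simp in r1 r2.
    by have := low r r2; rewrite E lee_fin leNgt r1.
  - by rewrite leey.
  - have [r /andP[r1 r2]] : exists r, ratr r \in `]f x - 1, f x[.
      by apply: rat_in_itvoo; rewrite ltrBlDr ltrDl.
    rewrite !bnd_simp in r1 r2.
    by have := low r r2; rewrite E.
case E : L => [l| |] //.
- rewrite lee_fin leNgt; apply/negP => fl.
  have := upp ((f x + l) / 2); rewrite E lee_fin.
  have -> : f x < (f x + l) / 2 by lra.
  by move=> /(_ isT); lra.
- by have := upp (f x + 1); rewrite E ltrDl ltr01 => /(_ isT).
- by rewrite leNye.
Qed.
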